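(* Let $1<p<2$ and let $A,B$ be finite-dimensional Hilbert spaces with orthonormal bases $\{|j\rangle\}$ of $A$ and $\{|k\rangle\}$ of $B$. For a unit vector $|\varphi\rangle=\sum_{j,k}\varphi_{jk}|j\rangle|k\rangle$ put $q_j=\sum_k|\varphi_{jk}|^2$ and $$g_p(|\varphi\rangle)=\frac{1}{1-p}\ln\sum_j q_j^p .$$ Regarding $g_p$ as a function of the real coordinates $(\operatorname{Re}\varphi_{jk},\operatorname{Im}\varphi_{jk})\in\mathbb{R}^{2|A||B|}$, at every unit vector $|\varphi\rangle$ one has $$\nabla g_p\cdot\nabla g_p=\frac{4p^2}{(1-p)^2}\,\frac{\sum_j q_j^{2p-1}}{\left(\sum_j q_j^p\right)^2}\le \frac{4p^2}{(1-p)^2}\,|A|^{p-1}.$$ Consequently $g_p$ is Lipschitz on the unit sphere of $A\otimes B$ (with respect to the Euclidean norm) with constant at most $\frac{2p}{p-1}|A|^{(p-1)/2}$.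
   Context: $|A|$ denotes the dimension of $A$; logarithms are natural. *)

(* Defs.v *)
From Stdlib Require Import Reals Lra Lia Arith.
Open Scope R_scope.

Fixpoint rsum (n : nat) (f : nat -> R) : R :=
  match n with
  | O => 0
  | S m => rsum m f + f m
  end.

(* Real power x^y for x >= 0, with the convention 0^y = 0 (y > 0).
   (Stdlib's Rpower 0 y = 1, which is the wrong convention here.) *)
Definition pw (x y : R) : R :=
  if Req_EM_T x 0 then 0 else Rpower x y.

(* A vector of A (x) B, dim A = a, dim B = b, is given by its real parts
   re j k and imaginary parts im j k (j < a, k < b). *)

Definition qj (b : nat) (re im : nat -> nat -> R) (j : nat) : R :=
  rsum b (fun k => re j k ^ 2 + im j k ^ 2).

Definition gp (p : R) (a b : nat) (re im : nat -> nat -> R) : R :=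
  / (1 - p) * ln (rsum a (fun j => pw (qj b re im j) p)).

Definition sqnorm (a b : nat) (re im : nat -> nat -> R) : R :=
  rsum a (fun j => qj b re im j).

Definition is_unit (a b : nat) (re im : nat -> nat -> R) : Prop :=
  sqnorm a b re im = 1.

Definition edist (a b : nat) (re im re' im' : nat -> nat -> R) : R :=
  sqrt (sqnorm a b (fun j k => re j k - re' j k) (fun j k => im j k - im' j k)).

Definition upd (f : nat -> nat -> R) (j k : nat) (t : R) : nat -> nat -> R :=
  fun j' k' => if andb (Nat.eqb j' j) (Nat.eqb k' k) then t else f j' k'.

(* Main.v *)
Require Import Defs.
From Stdlib Require Import Reals Lra Lia Arith FunctionalExtensionality.
Open Scope R_scope.

Lemma rsum_ext n f g : (forall i, (i < n)%nat -> f i = g i) -> rsum n f = rsum n g.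
Proof. induction n; simpl; intros H; auto. rewrite IHn by (intros; apply H; lia). rewrite H by lia; auto. Qed.

Lemma rsum_le n f g : (forall i, (i < n)%nat -> f i <= g i) -> rsum n f <= rsum n g.
Proof. induction n; simpl; intros H; [lra|]. assert (H1 := H n ltac:(lia)). assert (rsum n f <= rsum n g) by (apply IHn; intros; apply H; lia). lra. Qed.

Lemma rsum_nonneg n f : (forall i, (i < n)%nat -> 0 <= f i) -> 0 <= rsum n f.
Proof. intros H. replace 0 with (rsum n (fun _ => 0)). apply rsum_le; auto. induction n; simpl; auto. rewrite IHn; [lra| intros; apply H; lia]. Qed.

Lemma rsum_plus n f g : rsum n (fun i => f i + g i) = rsum n f + rsum n g.
Proof. induction n; simpl; [lra|]. rewrite IHn; lra. Qed.

Lemma rsum_scal n c f : rsum n (fun i => c * f i) = c * rsum n f.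
Proof. induction n; simpl; [lra|]. rewrite IHn; lra. Qed.

Lemma rsum_const n c : rsum n (fun _ => c) = INR n * c.
Proof. induction n; simpl rsum; [simpl; lra|]. rewrite IHn, S_INR; lra. Qed.

Lemma rsum_upd n f x k : (k < n)%nat ->
  rsum n (fun i => if Nat.eqb i k then x else f i) = rsum n f - f k + x.
Proof.
  induction n; intros Hk; [lia|]. simpl.
  destruct (Nat.eq_dec n k).
  - subst. rewrite Nat.eqb_refl.
    rewrite (rsum_ext k _ f). lra. intros i Hi. destruct (Nat.eqb_spec i k); [lia|auto].
  - assert (Nat.eqb n k = false) as E by (apply Nat.eqb_neq; auto). rewrite E.
    rewrite IHn by lia. lra.
Qed.

Lemma rsum_ge_term n f k : (k < n)%nat -> (forall i, (i < n)%nat -> 0 <= f i) -> f k <= rsum n f.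
Proof.
  intros Hk H. assert (E := rsum_upd n f 0 k Hk).
  assert (0 <= rsum n (fun i => if Nat.eqb i k then 0 else f i)).
  { apply rsum_nonneg. intros i Hi. destruct (Nat.eqb i k); [lra|auto]. }
  lra.
Qed.

Lemma CS n f1 f2 g1 g2 :
  (rsum n (fun i => f1 i * g1 i + f2 i * g2 i))^2 <=
  rsum n (fun i => f1 i ^2 + f2 i ^2) * rsum n (fun i => g1 i ^2 + g2 i ^2).
Proof.
  set (X := rsum n (fun i => f1 i ^2 + f2 i ^2)).
  set (Y := rsum n (fun i => g1 i ^2 + g2 i ^2)).
  set (P := rsum n (fun i => f1 i * g1 i + f2 i * g2 i)).
  assert (Hq : forall t, 0 <= X * t^2 + 2 * P * t + Y).
  { intros t. assert (E : X * t^2 + 2*P*t + Y = rsum n (fun i => (t * f1 i + g1 i)^2 + (t * f2 i + g2 i)^2)).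
    { unfold X, Y, P. rewrite (rsum_ext n (fun i => (t * f1 i + g1 i)^2 + (t * f2 i + g2 i)^2) (fun i => t^2 * (f1 i ^2 + f2 i ^2) + ((2*t) * (f1 i * g1 i + f2 i * g2 i) + (g1 i ^2 + g2 i ^2)))) by (intros; ring).
      rewrite !rsum_plus, !rsum_scal, !rsum_plus. ring. }
    rewrite E. apply rsum_nonneg; intros; apply Rplus_le_le_0_compat; apply pow2_ge_0. }
  assert (HX : 0 <= X) by (apply rsum_nonneg; intros; apply Rplus_le_le_0_compat; apply pow2_ge_0).
  assert (HY : 0 <= Y) by (apply rsum_nonneg; intros; apply Rplus_le_le_0_compat; apply pow2_ge_0).
  destruct (Req_dec X 0) as [H0|H0].
  - destruct (Req_dec P 0) as [HP|HP]. { rewrite HP; nra. }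
    exfalso. specialize (Hq (-(Y+1)/(2*P))). rewrite H0 in Hq.
    replace (0 * (- (Y + 1) / (2 * P)) ^ 2 + 2 * P * (- (Y + 1) / (2 * P)) + Y) with (-1) in Hq by (field; auto). lra.
  - specialize (Hq (-P/X)).
    replace (X * (- P / X) ^ 2 + 2 * P * (- P / X) + Y) with ((X*Y - P^2)/X) in Hq by (field; auto).
    assert (0 < X) by lra.
    assert (0 <= X*Y - P^2). { apply Rmult_le_reg_r with (/X). apply Rinv_0_lt_compat; lra. lra. }
    lra.
Qed.

Lemma pw_0 y : pw 0 y = 0.
Proof. unfold pw. destruct (Req_EM_T 0 0); lra. Qed.
Lemma pw_pos x y : 0 < x -> pw x y = Rpower x y.
Proof. intros. unfold pw. destruct (Req_EM_T x 0); [lra|auto]. Qed.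
Lemma Rpower_pos x y : 0 < Rpower x y.
Proof. unfold Rpower. apply exp_pos. Qed.
Lemma pw_nonneg x y : 0 <= pw x y.
Proof. unfold pw. destruct (Req_EM_T x 0); [lra|]. left; apply Rpower_pos. Qed.
Lemma pw_mult x y z : 0 <= x -> pw x y * pw x z = pw x (y+z).
Proof. intros [H|H]. rewrite !pw_pos by auto. rewrite Rpower_plus; auto. subst; rewrite !pw_0; ring. Qed.
Lemma pw_1 x : 0 <= x -> pw x 1 = x.
Proof. intros [H|H]. rewrite pw_pos, Rpower_1; auto. subst; apply pw_0. Qed.
Lemma pw_le1 x y : 0 <= x <= 1 -> 0 <= y -> pw x y <= 1.
Proof. intros [[H|H] H1] Hy. rewrite pw_pos by auto. unfold Rpower. rewrite <- exp_0.
  destruct (Rle_lt_or_eq_dec _ _ Hy) as [Hy'|Hy'].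
  - destruct H1 as [H1|H1]. left; apply exp_increasing. assert (ln x < 0). { rewrite <- ln_1. apply ln_increasing; auto. } nra.
    subst. rewrite ln_1. right; f_equal; ring.
  - subst. right; f_equal; ring.
  - subst. rewrite pw_0; lra. Qed.
Lemma pw_sq w e : 0 <= w -> pw (w^2) e = pw w (2*e).
Proof. intros [H|H]. rewrite !pw_pos by nra. unfold Rpower. f_equal. rewrite <- Rsqr_pow2. unfold Rsqr. rewrite ln_mult by auto. ring.
  subst. replace (0^2) with 0 by ring. rewrite !pw_0; auto. Qed.
Lemma pw_mono x y e : 0 <= x <= y -> 0 <= e -> pw x e <= pw y e.
Proof. intros [[H|H] H1] He. rewrite !pw_pos by lra. apply Rle_Rpower_l; lra. subst. rewrite pw_0; apply pw_nonneg. Qed.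

Lemma tangent e x r : 1 <= e -> 0 <= x -> 0 <= r ->
  pw r e + e * pw r (e-1) * (x - r) <= pw x e.
Proof.
  intros He Hx [Hr|Hr]; [|subst; rewrite !pw_0; rewrite Rmult_0_r, Rmult_0_l, Rplus_0_l; apply pw_nonneg].
  assert (Hrr : pw r (e-1) * r = pw r e). { rewrite <- (pw_1 r) at 2 by lra. rewrite pw_mult by lra. f_equal; ring. }
  destruct Hx as [Hx|Hx]; [|subst; rewrite pw_0; assert (0 <= pw r e) by apply pw_nonneg; nra].
  rewrite !pw_pos by auto. rewrite pw_pos in Hrr by auto.
  assert (D : forall c, 0 < c -> derivable_pt_lim (fun s => Rpower s e) c (e * Rpower c (e - 1))).
  { intros; apply derivable_pt_lim_power; auto. }
  destruct (Rtotal_order r x) as [Hlt|[Heq|Hgt]].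
  - destruct (MVT_cor2 (fun s => Rpower s e) (fun c => e * Rpower c (e-1)) r x Hlt) as [c [Hc Hc2]].
    { intros c Hc; apply D; lra. }
    assert (Rpower r (e-1) <= Rpower c (e-1)) by (apply Rle_Rpower_l; lra).
    assert (0 <= (Rpower c (e-1) - Rpower r (e-1)) * (x - r)) by (apply Rmult_le_pos; lra).
    assert (0 <= e * ((Rpower c (e-1) - Rpower r (e-1)) * (x - r))) by (apply Rmult_le_pos; lra).
    nra.
  - subst. lra.
  - destruct (MVT_cor2 (fun s => Rpower s e) (fun c => e * Rpower c (e-1)) x r Hgt) as [c [Hc Hc2]].
    { intros c Hc; apply D; lra. }
    assert (Rpower c (e-1) <= Rpower r (e-1)) by (apply Rle_Rpower_l; lra).
    assert (0 <= (Rpower r (e-1) - Rpower c (e-1)) * (r - x)) by (apply Rmult_le_pos; lra).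
    assert (0 <= e * ((Rpower r (e-1) - Rpower c (e-1)) * (r - x))) by (apply Rmult_le_pos; lra).
    nra.
Qed.

Lemma log_ineq t : 1 <= t -> 2 * ln t <= t - / t.
Proof.
  intros Ht. set (y := ln t).
  assert (Hy : 0 <= y). { unfold y. rewrite <- ln_1. destruct Ht as [Ht|Ht]. left; apply ln_increasing; lra. subst; lra. }
  assert (Et : t = exp y) by (unfold y; rewrite exp_ln; lra).
  assert (Eit : / t = exp (- y)) by (rewrite exp_Ropp, Et; auto).
  assert (y <= sinh y).
  { destruct Hy as [Hy|Hy]; [|rewrite <- Hy; unfold sinh; rewrite Ropp_0, exp_0; lra].
    destruct (MVT_cor2 (fun s => sinh s - s) (fun c => cosh c - 1) 0 y Hy) as [c [Hc _]].
    { intros c _. apply (derivable_pt_lim_minus sinh id). apply derivable_pt_lim_sinh. apply derivable_pt_lim_id. }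
    assert (1 <= cosh c).
    { unfold cosh. assert (exp c * exp (-c) = 1) by (rewrite <- exp_plus; replace (c + -c) with 0 by ring; apply exp_0).
      assert (0 < exp c) by apply exp_pos. assert (0 < exp (-c)) by apply exp_pos. assert (0 <= (exp c - exp (-c))^2) by apply pow2_ge_0. nra. }
    assert (sinh 0 = 0) by (unfold sinh; rewrite Ropp_0; lra). nra. }
  unfold sinh in H. rewrite Eit. rewrite Et at 1. lra.
Qed.

Lemma d_sq C t0 : derivable_pt_lim (fun t => t^2 + C) t0 (2*t0).
Proof.
  assert (H := derivable_pt_lim_plus (fun t => t^2) (fct_cte C) t0 _ _ (derivable_pt_lim_pow t0 2) (derivable_pt_lim_const C t0)).
  replace (2*t0) with (INR 2 * t0^(pred 2) + 0) by (simpl; ring). exact H.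
Qed.

Lemma dpw_loc p C t0 a b : a < t0 < b -> (forall z, a < z < b -> 0 < z^2 + C) ->
  derivable_pt_lim (fun t => pw (t^2 + C) p) t0 (p * pw (t0^2 + C) (p-1) * (2*t0)).
Proof.
  intros Hab Hz.
  apply (derivable_pt_lim_locally_ext (fun t => Rpower (t^2 + C) p) _ t0 a b); auto.
  { intros z Hz'. rewrite pw_pos; auto. }
  rewrite pw_pos by auto.
  apply (derivable_pt_lim_comp (fun t => t^2 + C) (fun s => Rpower s p)). apply d_sq.
  apply derivable_pt_lim_power; auto.
Qed.

Lemma dpw p C t0 : 1 < p -> 0 <= C ->
  derivable_pt_lim (fun t => pw (t^2 + C) p) t0 (p * pw (t0^2 + C) (p-1) * (2*t0)).
Proof.
  intros Hp HC.
  destruct (Req_dec C 0) as [HC0|HC0]; [destruct (Req_dec t0 0) as [Ht0|Ht0]|].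
  - subst. replace (0^2+0) with 0 by ring. rewrite pw_0. replace (p*0*(2*0)) with 0 by ring.
    intros eps Heps.
    assert (Hd : 0 < Rmin 1 eps) by (apply Rmin_pos; lra).
    exists (mkposreal _ Hd). intros h Hh Hhd. simpl in Hhd.
    assert (h1 : Rabs h < 1) by (eapply Rlt_le_trans; [exact Hhd| apply Rmin_l]).
    assert (h2 : Rabs h < eps) by (eapply Rlt_le_trans; [exact Hhd| apply Rmin_r]).
    replace ((0+h)^2+0) with (h^2) by ring. replace (0^2+0) with 0 by ring. rewrite pw_0, Rminus_0_r, Rminus_0_r.
    assert (Hh2 : 0 <= h^2 <= 1). { split. apply pow2_ge_0. rewrite <- (pow2_abs h). assert (0 <= Rabs h) by apply Rabs_pos. nra. }
    assert (E : pw (h^2) p = h^2 * pw (h^2) (p-1)).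
    { rewrite <- (pw_1 (h^2)) at 2 by lra. rewrite pw_mult by lra. f_equal; ring. }
    assert (B : pw (h^2) (p-1) <= 1) by (apply pw_le1; lra).
    assert (B0 : 0 <= pw (h^2) (p-1)) by apply pw_nonneg.
    rewrite E. replace (h^2 * pw (h^2) (p-1) / h) with (h * pw (h^2) (p-1)) by (field; auto).
    rewrite Rabs_mult, (Rabs_right (pw _ _)) by lra.
    assert (0 <= Rabs h) by apply Rabs_pos. nra.
  - apply (dpw_loc p C t0 (t0 - Rabs t0) (t0 + Rabs t0)).
    + assert (0 < Rabs t0) by (apply Rabs_pos_lt; auto). lra.
    + intros z Hz. assert (z <> 0). { intros ->. destruct (Rcase_abs t0); [rewrite Rabs_left in Hz|rewrite Rabs_right in Hz]; lra. }
      assert (0 < z^2) by (rewrite <- Rsqr_pow2; apply Rsqr_pos_lt; auto). lra.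
  - apply (dpw_loc p C t0 (t0 - 1) (t0 + 1)). lra.
    intros z _. assert (0 <= z^2) by apply pow2_ge_0. lra.
Qed.

Lemma dg p K C t0 : 1 < p -> 0 <= C -> 0 < K + pw (t0^2 + C) p ->
  derivable_pt_lim (fun t => / (1 - p) * ln (K + pw (t^2 + C) p)) t0
    (/ (1 - p) * (p * pw (t0^2 + C) (p-1) * (2*t0)) / (K + pw (t0^2 + C) p)).
Proof.
  intros Hp HC HS.
  assert (H1 : derivable_pt_lim (fun t => K + pw (t^2 + C) p) t0 (0 + p * pw (t0^2 + C) (p-1) * (2*t0))).
  { apply (derivable_pt_lim_plus (fct_cte K) (fun t => pw (t^2 + C) p)). apply derivable_pt_lim_const. apply dpw; auto. }
  assert (H2 := derivable_pt_lim_comp _ ln t0 _ _ H1 (derivable_pt_lim_ln _ HS)).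
  assert (H3 := derivable_pt_lim_scal _ (/ (1 - p)) t0 _ H2).
  replace (/ (1 - p) * (p * pw (t0^2 + C) (p-1) * (2*t0)) / (K + pw (t0^2 + C) p))
    with (/ (1 - p) * (/ (K + pw (t0 ^ 2 + C) p) * (0 + p * pw (t0 ^ 2 + C) (p - 1) * (2 * t0)))).
  exact H3. field. lra.
Qed.

Lemma qj_swap b re im j : qj b re im j = qj b im re j.
Proof. unfold qj. apply rsum_ext; intros; ring. Qed.

Lemma qj_nonneg b re im j : 0 <= qj b re im j.
Proof. unfold qj. apply rsum_nonneg; intros. apply Rplus_le_le_0_compat; apply pow2_ge_0. Qed.

Lemma qj_upd_same b re im j k t : (k < b)%nat ->
  qj b (upd re j k t) im j = t^2 + (qj b re im j - re j k ^2).
Proof.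
  intros Hk. unfold qj.
  rewrite (rsum_ext b _ (fun k' => if Nat.eqb k' k then t^2 + im j k^2 else re j k' ^2 + im j k' ^2)).
  rewrite rsum_upd by auto. ring.
  intros i Hi. unfold upd. rewrite Nat.eqb_refl. simpl. destruct (Nat.eqb_spec i k); subst; auto.
Qed.

Lemma qj_upd_other b re im j j' k t : j' <> j ->
  qj b (upd re j k t) im j' = qj b re im j'.
Proof.
  intros H. unfold qj. apply rsum_ext. intros i Hi. unfold upd.
  destruct (Nat.eqb_spec j' j); [lia|]. simpl. auto.
Qed.

Lemma qj_le b re im j k : (k < b)%nat -> re j k ^2 <= qj b re im j.
Proof.
  intros Hk. assert (H := rsum_ge_term b (fun k => re j k ^2 + im j k ^2) k Hk).
  assert (0 <= im j k ^2) by apply pow2_ge_0.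
  unfold qj. assert (re j k ^ 2 + im j k ^ 2 <= rsum b (fun k => re j k ^2 + im j k ^2)).
  apply H. intros; apply Rplus_le_le_0_compat; apply pow2_ge_0. lra.
Qed.

Definition Sp p a b re im := rsum a (fun j => pw (qj b re im j) p).

Lemma deriv_re p a b re im j k : 1 < p -> (j < a)%nat -> (k < b)%nat -> 0 < Sp p a b re im ->
  derivable_pt_lim (fun t => gp p a b (upd re j k t) im) (re j k)
   (/ (1 - p) * (p * pw (qj b re im j) (p-1) * (2 * re j k)) / Sp p a b re im).
Proof.
  intros Hp Hj Hk HS.
  set (C := qj b re im j - re j k ^2).
  set (K := Sp p a b re im - pw (qj b re im j) p).
  assert (HC : 0 <= C) by (unfold C; assert (H := qj_le b re im j k Hk); lra).
  assert (Eq : qj b re im j = re j k ^2 + C) by (unfold C; ring).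
  assert (E : forall t, gp p a b (upd re j k t) im = / (1 - p) * ln (K + pw (t^2 + C) p)).
  { intros t. unfold gp. f_equal. f_equal.
    rewrite (rsum_ext a _ (fun j' => if Nat.eqb j' j then pw (t^2 + C) p else pw (qj b re im j') p)).
    rewrite rsum_upd by auto. unfold K, Sp. ring.
    intros i Hi. destruct (Nat.eqb_spec i j).
    - subst. rewrite qj_upd_same by auto. auto.
    - rewrite qj_upd_other by auto. auto. }
  rewrite (functional_extensionality _ _ E).
  assert (ES : Sp p a b re im = K + pw (re j k ^2 + C) p) by (unfold K; rewrite <- Eq; ring).
  rewrite ES, Eq. apply dg; auto. rewrite <- ES; auto.
Qed.

Lemma deriv_im p a b re im j k : 1 < p -> (j < a)%nat -> (k < b)%nat -> 0 < Sp p a b re im ->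
  derivable_pt_lim (fun t => gp p a b re (upd im j k t)) (im j k)
   (/ (1 - p) * (p * pw (qj b re im j) (p-1) * (2 * im j k)) / Sp p a b re im).
Proof.
  intros Hp Hj Hk HS.
  assert (E1 : forall t, gp p a b re (upd im j k t) = gp p a b (upd im j k t) re).
  { intros t. unfold gp. f_equal. f_equal. apply rsum_ext. intros. rewrite qj_swap; auto. }
  assert (E2 : Sp p a b re im = Sp p a b im re).
  { unfold Sp. apply rsum_ext. intros. rewrite qj_swap; auto. }
  rewrite (functional_extensionality _ _ E1), E2, qj_swap.
  apply deriv_re; auto. rewrite <- E2; auto.
Qed.

Lemma unit_a_pos a b re im : is_unit a b re im -> (0 < a)%nat.
Proof. unfold is_unit, sqnorm. destruct a; simpl; intros; lra || lia. Qed.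

Lemma qj_le1 a b re im j : is_unit a b re im -> (j < a)%nat -> qj b re im j <= 1.
Proof. intros H Hj. unfold is_unit, sqnorm in H. rewrite <- H. apply rsum_ge_term; auto. intros; apply qj_nonneg. Qed.

Lemma power_mean p a b re im : 1 < p -> is_unit a b re im -> Rpower (INR a) (1 - p) <= Sp p a b re im.
Proof.
  intros Hp Hu. assert (Ha := unit_a_pos _ _ _ _ Hu). assert (Ha' : 0 < INR a) by (apply lt_0_INR; auto).
  set (r := / INR a). assert (Hr : 0 < r) by (apply Rinv_0_lt_compat; auto).
  assert (H : rsum a (fun j => pw r p + p * pw r (p-1) * (qj b re im j - r)) <= Sp p a b re im).
  { apply rsum_le. intros. apply tangent; [lra|apply qj_nonneg|lra]. }
  rewrite rsum_plus, rsum_const in H.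
  rewrite (rsum_ext a _ (fun j => (p * pw r (p-1)) * (qj b re im j + (- r)))) in H by (intros; ring).
  rewrite rsum_scal, rsum_plus, rsum_const in H.
  unfold is_unit, sqnorm in Hu. change (rsum a (qj b re im)) with (rsum a (fun j => qj b re im j)) in H. rewrite Hu in H.
  replace (1 + INR a * - r) with 0 in H by (unfold r; field; lra).
  rewrite pw_pos in H by auto.
  replace (Rpower (INR a) (1 - p)) with (INR a * Rpower r p). lra.
  unfold r, Rpower. rewrite ln_Rinv by auto. rewrite <- (exp_ln (INR a)) at 1 by auto.
  rewrite <- exp_plus. f_equal. ring.
Qed.

Lemma pw_sq_id q p : 0 <= q -> pw q (p-1) ^2 * q = pw q (2*p-1).
Proof. intros Hq. rewrite <- (pw_1 q) at 2 by auto. simpl. rewrite Rmult_1_r, !pw_mult by auto. f_equal; ring. Qed.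

Lemma part1 p a b re im : 1 < p -> is_unit a b re im ->
    exists dre dim : nat -> nat -> R,
      (forall j k, (j < a)%nat -> (k < b)%nat ->
         derivable_pt_lim (fun t => gp p a b (upd re j k t) im) (re j k) (dre j k)) /\
      (forall j k, (j < a)%nat -> (k < b)%nat ->
         derivable_pt_lim (fun t => gp p a b re (upd im j k t)) (im j k) (dim j k)) /\
      rsum a (fun j => rsum b (fun k => dre j k ^ 2 + dim j k ^ 2))
        = 4 * p ^ 2 / (1 - p) ^ 2 *
          (rsum a (fun j => pw (qj b re im j) (2 * p - 1))
           / (rsum a (fun j => pw (qj b re im j) p)) ^ 2) /\
      4 * p ^ 2 / (1 - p) ^ 2 *
          (rsum a (fun j => pw (qj b re im j) (2 * p - 1))
           / (rsum a (fun j => pw (qj b re im j) p)) ^ 2)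
        <= 4 * p ^ 2 / (1 - p) ^ 2 * Rpower (INR a) (p - 1).
Proof.
  intros Hp Hu.
  assert (HSm := power_mean p a b re im Hp Hu).
  assert (HS : 0 < Sp p a b re im) by (eapply Rlt_le_trans; [apply Rpower_pos|exact HSm]).
  exists (fun j k => / (1 - p) * (p * pw (qj b re im j) (p-1) * (2 * re j k)) / Sp p a b re im).
  exists (fun j k => / (1 - p) * (p * pw (qj b re im j) (p-1) * (2 * im j k)) / Sp p a b re im).
  split; [|split; [|split]].
  - intros; apply deriv_re; auto.
  - intros; apply deriv_im; auto.
  - fold (Sp p a b re im).
    rewrite (rsum_ext a _ (fun j => (4 * p ^ 2 / (1 - p) ^ 2 / Sp p a b re im ^2) * pw (qj b re im j) (2 * p - 1))).
    rewrite rsum_scal. field. split; lra.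
    intros j Hj.
    rewrite (rsum_ext b _ (fun k => (/ (1 - p) * p * pw (qj b re im j) (p-1) * 2 / Sp p a b re im)^2 * (re j k ^2 + im j k ^2))).
    rewrite rsum_scal. fold (qj b re im j).
    rewrite <- pw_sq_id by apply qj_nonneg. field. split; lra.
    intros; field; split; lra.
  - fold (Sp p a b re im).
    apply Rmult_le_compat_l. { apply Rmult_le_pos. nra. apply Rlt_le, Rinv_0_lt_compat. nra. }
    assert (T : rsum a (fun j => pw (qj b re im j) (2 * p - 1)) <= Sp p a b re im).
    { apply rsum_le. intros j Hj. replace (2*p-1) with (p + (p-1)) by ring. rewrite <- pw_mult by apply qj_nonneg.
      assert (pw (qj b re im j) (p-1) <= 1) by (apply pw_le1; [split; [apply qj_nonneg|apply qj_le1 with a; auto]|lra]).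
      assert (0 <= pw (qj b re im j) p) by apply pw_nonneg. nra. }
    assert (E : Rpower (INR a) (p - 1) = / Rpower (INR a) (1 - p)).
    { rewrite <- Rpower_Ropp. f_equal; ring. }
    rewrite E. unfold Rdiv. apply Rle_trans with (Sp p a b re im * / Sp p a b re im ^2).
    apply Rmult_le_compat_r; auto. apply Rlt_le, Rinv_0_lt_compat. nra.
    replace (Sp p a b re im * / Sp p a b re im ^ 2) with (/ Sp p a b re im) by (field; lra).
    apply Rinv_le_contravar; auto. apply Rpower_pos.
Qed.

Lemma CS1 n f g : rsum n (fun i => f i * g i) <= sqrt (rsum n (fun i => f i ^2)) * sqrt (rsum n (fun i => g i ^2)).
Proof.
  assert (H := CS n f (fun _ => 0) g (fun _ => 0)). cbv beta in H.
  rewrite (rsum_ext n (fun i => f i * g i + 0 * 0) (fun i => f i * g i)) in H by (intros; ring).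
  rewrite (rsum_ext n (fun i => f i ^2 + 0 ^2) (fun i => f i ^2)) in H by (intros; ring).
  rewrite (rsum_ext n (fun i => g i ^2 + 0 ^2) (fun i => g i ^2)) in H by (intros; ring).
  rewrite <- sqrt_mult by (apply rsum_nonneg; intros; apply pow2_ge_0).
  set (D := rsum n (fun i => f i * g i)) in *.
  apply Rle_trans with (Rabs D). apply Rle_abs.
  rewrite <- sqrt_Rsqr_abs. apply sqrt_le_1_alt. rewrite Rsqr_pow2. auto.
Qed.

Lemma row_diff b re im re' im' j :
  (sqrt (qj b re im j) - sqrt (qj b re' im' j))^2 <=
  qj b (fun j k => re j k - re' j k) (fun j k => im j k - im' j k) j.
Proof.
  assert (H := CS b (re j) (im j) (re' j) (im' j)).
  set (P := rsum b (fun i => re j i * re' j i + im j i * im' j i)) in *.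
  assert (E : qj b (fun j k => re j k - re' j k) (fun j k => im j k - im' j k) j = qj b re im j + qj b re' im' j - 2 * P).
  { unfold qj, P. cbv beta. rewrite (rsum_ext b (fun i => (re j i - re' j i)^2 + (im j i - im' j i)^2) (fun i => (re j i ^2 + im j i ^2) + ((re' j i ^2 + im' j i ^2) + (-2) * (re j i * re' j i + im j i * im' j i)))) by (intros; ring).
    rewrite !rsum_plus, rsum_scal, !rsum_plus. ring. }
  rewrite E. fold (qj b re im j) (qj b re' im' j) in H.
  assert (Hq := qj_nonneg b re im j). assert (Hq' := qj_nonneg b re' im' j).
  assert (P <= sqrt (qj b re im j) * sqrt (qj b re' im' j)).
  { rewrite <- sqrt_mult by auto. apply Rle_trans with (Rabs P). apply Rle_abs.
    rewrite <- sqrt_Rsqr_abs. apply sqrt_le_1_alt. rewrite Rsqr_pow2. auto. }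
  assert (sqrt (qj b re im j) ^2 = qj b re im j) by (apply pow2_sqrt; auto).
  assert (sqrt (qj b re' im' j) ^2 = qj b re' im' j) by (apply pow2_sqrt; auto).
  nra.
Qed.

Lemma key p a b re im re' im' : 1 < p -> is_unit a b re im -> is_unit a b re' im' ->
  Sp p a b re im - Sp p a b re' im' <= 2 * p * sqrt (Sp p a b re im) * edist a b re im re' im'.
Proof.
  intros Hp Hu Hu'.
  set (w := fun j => sqrt (qj b re im j)). set (w' := fun j => sqrt (qj b re' im' j)).
  assert (Ew : forall j, pw (qj b re im j) p = pw (w j) (2*p)).
  { intros j. unfold w. rewrite <- pw_sq by apply sqrt_pos. rewrite pow2_sqrt; auto. apply qj_nonneg. }
  assert (Ew' : forall j, pw (qj b re' im' j) p = pw (w' j) (2*p)).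
  { intros j. unfold w'. rewrite <- pw_sq by apply sqrt_pos. rewrite pow2_sqrt; auto. apply qj_nonneg. }
  set (al := fun j => pw (w j) (2*p-1)).
  assert (H1 : Sp p a b re im - Sp p a b re' im' <= 2 * p * rsum a (fun j => al j * (w j - w' j))).
  { assert (H : rsum a (fun j => pw (w j) (2*p) + 2*p * pw (w j) (2*p-1) * (w' j - w j)) <= Sp p a b re' im').
    { unfold Sp. apply rsum_le. intros j Hj. rewrite Ew'. apply tangent; [lra|apply sqrt_pos|apply sqrt_pos]. }
    rewrite (rsum_ext a _ (fun j => pw (w j) (2*p) + (- (2*p)) * (al j * (w j - w' j)))) in H by (intros; unfold al; ring).
    rewrite rsum_plus, rsum_scal in H.
    replace (Sp p a b re im) with (rsum a (fun j => pw (w j) (2*p))). lra.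
    unfold Sp. apply rsum_ext. intros; auto. }
  assert (H2 := CS1 a al (fun j => w j - w' j)).
  assert (H3 : rsum a (fun j => al j ^2) <= Sp p a b re im).
  { unfold Sp. apply rsum_le. intros j Hj. rewrite Ew. unfold al. simpl. rewrite Rmult_1_r, pw_mult by apply sqrt_pos.
    replace (2*p-1+(2*p-1)) with (2*p + (2*p-2)) by ring. rewrite <- pw_mult by apply sqrt_pos.
    assert (pw (w j) (2*p-2) <= 1).
    { apply pw_le1; [|lra]. split. apply sqrt_pos. unfold w. rewrite <- sqrt_1. apply sqrt_le_1_alt. apply qj_le1 with a; auto. }
    assert (0 <= pw (w j) (2*p)) by apply pw_nonneg. nra. }
  assert (H4 : rsum a (fun j => (w j - w' j)^2) <= edist a b re im re' im' ^2).
  { unfold edist. rewrite pow2_sqrt by (apply rsum_nonneg; intros; apply qj_nonneg).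
    unfold sqnorm. apply rsum_le. intros j Hj. apply row_diff. }
  assert (H5 : sqrt (rsum a (fun j => (w j - w' j)^2)) <= edist a b re im re' im').
  { unfold edist. apply sqrt_le_1_alt. unfold edist in H4. rewrite pow2_sqrt in H4 by (apply rsum_nonneg; intros; apply qj_nonneg). auto. }
  assert (H6 : sqrt (rsum a (fun j => al j ^2)) <= sqrt (Sp p a b re im)) by (apply sqrt_le_1_alt; auto).
  assert (0 <= sqrt (rsum a (fun j => al j ^2))) by apply sqrt_pos.
  assert (0 <= sqrt (rsum a (fun j => (w j - w' j)^2))) by apply sqrt_pos.
  assert (0 <= sqrt (Sp p a b re im)) by apply sqrt_pos.
  assert (rsum a (fun j => al j * (w j - w' j)) <= sqrt (Sp p a b re im) * edist a b re im re' im').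
  { eapply Rle_trans. apply H2. apply Rmult_le_compat; auto. }
  nra.
Qed.

Lemma one_side p a b re im re' im' : 1 < p -> is_unit a b re im -> is_unit a b re' im' ->
  ln (Sp p a b re im) - ln (Sp p a b re' im') <= 2 * p * Rpower (INR a) ((p - 1) / 2) * edist a b re im re' im'.
Proof.
  intros Hp Hu Hu'.
  assert (HE : 0 <= edist a b re im re' im') by apply sqrt_pos.
  assert (HR : 0 < Rpower (INR a) ((p - 1) / 2)) by apply Rpower_pos.
  set (S := Sp p a b re im). set (S' := Sp p a b re' im').
  assert (Hm := power_mean p a b re im Hp Hu). assert (Hm' := power_mean p a b re' im' Hp Hu').
  fold S in Hm. fold S' in Hm'.
  assert (Hpos := Rpower_pos (INR a) (1 - p)).
  destruct (Rle_lt_dec S S') as [Hle|Hlt].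
  - assert (ln S <= ln S'). { destruct Hle as [Hl|He]. left; apply ln_increasing; lra. rewrite He; lra. }
    assert (0 <= 2 * p * Rpower (INR a) ((p - 1) / 2) * edist a b re im re' im').
    { apply Rmult_le_pos; auto. apply Rmult_le_pos; lra. } lra.
  - assert (K := key p a b re im re' im' Hp Hu Hu'). fold S S' in K.
    set (x := sqrt S). set (y := sqrt S'). set (E := edist a b re im re' im') in *.
    assert (Hx2 : x^2 = S) by (apply pow2_sqrt; lra). assert (Hy2 : y^2 = S') by (apply pow2_sqrt; lra).
    set (m := sqrt (Rpower (INR a) (1 - p))).
    assert (Hm0 : 0 < m) by (apply sqrt_lt_R0; auto).
    assert (Hym : m <= y) by (apply sqrt_le_1_alt; auto).
    assert (Hxy : y < x) by (apply sqrt_lt_1_alt; lra).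
    assert (Hmr : Rpower (INR a) ((p - 1) / 2) * m = 1).
    { unfold m. rewrite <- Rpower_sqrt by auto. rewrite Rpower_mult, <- Rpower_plus.
      replace ((p - 1) / 2 + (1 - p) * / 2) with 0 by field. apply Rpower_O. 
      apply lt_0_INR. apply (unit_a_pos _ _ _ _ Hu). }
    assert (Ht : 1 <= x / y). { apply Rmult_le_reg_r with y; [lra|]. unfold Rdiv. rewrite Rmult_assoc, Rinv_l by lra. lra. }
    assert (L := log_ineq (x / y) Ht).
    assert (Eln : ln S - ln S' = 2 * ln (x / y)).
    { rewrite <- Hx2, <- Hy2. rewrite <- !Rsqr_pow2. unfold Rsqr. rewrite !ln_mult by lra.
      unfold Rdiv. rewrite ln_mult, ln_Rinv by (try apply Rinv_0_lt_compat; lra). ring. }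
    rewrite Eln.
    assert (Q : x / y - / (x / y) = (x^2 - y^2) / (x * y)) by (field; lra).
    assert (B : (x^2 - y^2) / (x * y) <= 2 * p * E / y).
    { rewrite Hx2, Hy2. apply Rmult_le_reg_r with (x * y). nra.
      replace ((S - S') / (x * y) * (x * y)) with (S - S') by (field; lra).
      replace (2 * p * E / y * (x * y)) with (2 * p * x * E) by (field; lra). auto. }
    assert (B2 : 2 * p * E / y <= 2 * p * Rpower (INR a) ((p - 1) / 2) * E).
    { replace (2 * p * Rpower (INR a) ((p - 1) / 2) * E) with (2 * p * E / m).
      unfold Rdiv. apply Rmult_le_compat_l. apply Rmult_le_pos; lra. apply Rinv_le_contravar; auto.
      assert (Hr' : Rpower (INR a) ((p-1)/2) = / m) by (apply Rmult_eq_reg_r with m; [rewrite Hmr, Rinv_l; lra | lra]). rewrite Hr'. field. lra. }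
    lra.
Qed.

Lemma edist_sym a b re im re' im' : edist a b re im re' im' = edist a b re' im' re im.
Proof. unfold edist, sqnorm. f_equal. apply rsum_ext; intros. unfold qj. apply rsum_ext; intros. ring. Qed.

Theorem mainTheorem2 (p : R) (a b : nat) (hp1 : 1 < p) (hp2 : p < 2) :
  (forall re im : nat -> nat -> R,
    is_unit a b re im ->
    exists dre dim : nat -> nat -> R,
      (forall j k, (j < a)%nat -> (k < b)%nat ->
         derivable_pt_lim (fun t => gp p a b (upd re j k t) im) (re j k) (dre j k)) /\
      (forall j k, (j < a)%nat -> (k < b)%nat ->
         derivable_pt_lim (fun t => gp p a b re (upd im j k t)) (im j k) (dim j k)) /\
      rsum a (fun j => rsum b (fun k => dre j k ^ 2 + dim j k ^ 2))
        = 4 * p ^ 2 / (1 - p) ^ 2 *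
          (rsum a (fun j => pw (qj b re im j) (2 * p - 1))
           / (rsum a (fun j => pw (qj b re im j) p)) ^ 2) /\
      4 * p ^ 2 / (1 - p) ^ 2 *
          (rsum a (fun j => pw (qj b re im j) (2 * p - 1))
           / (rsum a (fun j => pw (qj b re im j) p)) ^ 2)
        <= 4 * p ^ 2 / (1 - p) ^ 2 * Rpower (INR a) (p - 1)) /\
  (forall re im re' im' : nat -> nat -> R,
    is_unit a b re im -> is_unit a b re' im' ->
    Rabs (gp p a b re im - gp p a b re' im')
      <= 2 * p / (p - 1) * Rpower (INR a) ((p - 1) / 2) * edist a b re im re' im').
Proof.
  split.
  - intros re im Hu. apply part1; auto.
  - intros re im re' im' Hu Hu'.
    assert (H1 := one_side p a b re im re' im' hp1 Hu Hu').
    assert (H2 := one_side p a b re' im' re im hp1 Hu' Hu).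
    rewrite <- edist_sym in H2.
    unfold gp. fold (Sp p a b re im) (Sp p a b re' im').
    set (E := 2 * p * Rpower (INR a) ((p - 1) / 2) * edist a b re im re' im') in *.
    replace (/ (1 - p) * ln (Sp p a b re im) - / (1 - p) * ln (Sp p a b re' im'))
      with ((ln (Sp p a b re' im') - ln (Sp p a b re im)) / (p - 1)) by (field; lra).
    replace (2 * p / (p - 1) * Rpower (INR a) ((p - 1) / 2) * edist a b re im re' im') with (E / (p - 1)) by (unfold E; field; lra).
    unfold Rdiv. rewrite Rabs_mult, (Rabs_right (/ (p - 1))) by (left; apply Rinv_0_lt_compat; lra).
    apply Rmult_le_compat_r. left; apply Rinv_0_lt_compat; lra.
    apply Rabs_le. lra.
Qed.
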